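(* Let $(X,\mathcal{B})$ be an $\mathrm{SQS}(v)$ and let $B = \{x_1,x_2,x_3,x_4\} \in \mathcal{B}$. Let $p$ be the probability that a block is available and $q = 1-p$. Then \[\mathcal{R}(p) = 1 - 4q^{r_1-1} + 6q^{2r_1-r_2-1} - 4q^{3r_1-3r_2} + q^{4r_1-6r_2+2},\] where $r_1 = \binom{v-1}{2}/3$ and $r_2 = \binom{v-2}{1}/2$.
   Context: A Steiner quadruple system $\mathrm{SQS}(v)$ is a $3$-$(v,4,1)$-design: a set $X$ of $v$ points with a collection $\mathcal{B}$ of $4$-subsets (blocks) such that every $3$-subset of $X$ lies in exactly one block; $r_1$ is the number of blocks containing a given point and $r_2$ the number containing a given pair of points. Reliability model: fix a block $B\in\mathcal{B}$. A repair set for $B$ is a subset $\mathcal{P}\subseteq \mathcal{B}\setminus\{B\}$ with $B \subseteq \bigcup_{B'\in\mathcal{P}} B'$. Each block of $\mathcal{B}\setminus\{B\}$ is, independently of the others, available with probability $p\in[0,1]$; a repair set is available if all of its blocks are available. $\mathcal{R}(p)$ is the probability that at least one available repair set for $B$ exists. *)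

(* Defs.v *)
From HB Require Import structures.
From mathcomp Require Import all_boot all_order all_algebra.
Set Implicit Arguments. Unset Strict Implicit. Unset Printing Implicit Defensive.
Import Order.TTheory GRing.Theory Num.Theory.

Definition is_SQS (v : nat) (blocks : {set {set 'I_v}}) : Prop :=
  (forall b, b \in blocks -> #|b| = 4) /\
  (forall T : {set 'I_v}, #|T| = 3 ->
     exists! b, b \in blocks /\ T \subset b).

Definition is_repair_set (v : nat) (blocks : {set {set 'I_v}})
  (B : {set 'I_v}) (P : {set {set 'I_v}}) : bool :=
  (P \subset blocks :\ B) && (B \subset cover P).

Local Open Scope ring_scope.

(* R(p): each block of blocks \ {B} is available independently with
   probability p. Sum over the set A of available blocks of the probability
   of that outcome, times the indicator that some repair set consists
   only of available blocks. *)
Definition reliability (R : nzRingType) (v : nat) (blocks : {set {set 'I_v}})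
  (B : {set 'I_v}) (p : R) : R :=
  \sum_(A in powerset (blocks :\ B))
     (p ^+ #|A| * (1 - p) ^+ (#|blocks :\ B| - #|A|)%N) *
     (([exists P in powerset A, is_repair_set blocks B P] : bool)%:R).

Definition r1 (v : nat) : nat := 'C(v.-1, 2) %/ 3.
Definition r2 (v : nat) : nat := 'C(v.-2, 1) %/ 2.

(* Main.v *)
Require Import Defs.
From HB Require Import structures.
From mathcomp Require Import all_boot all_order all_algebra.
From mathcomp Require Import zify ring lra.
Set Implicit Arguments. Unset Strict Implicit. Unset Printing Implicit Defensive.
Import Order.TTheory GRing.Theory Num.Theory.

Lemma card_sep (K : finType) (Z : {set K}) (P : pred K) :
  #|[set k in Z | P k]| = \sum_(k in Z) P k.
Proof.
rewrite -sum1_card big_mkcond [RHS]big_mkcond /=.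
by apply: eq_bigr => k _; rewrite !inE; case: (k \in Z); case: (P k).
Qed.

Lemma dcount (I J : finType) (X : {set I}) (Y : {set J}) (r : I -> J -> bool) :
  \sum_(i in X) #|[set j in Y | r i j]| = \sum_(j in Y) #|[set i in X | r i j]|.
Proof.
under eq_bigr do rewrite card_sep.
under [RHS]eq_bigr do rewrite card_sep.
exact: exchange_big.
Qed.

Lemma sub3 (I : finType) (A : {set I}) : 3 <= #|A| ->
  exists T0 : {set I}, #|T0| = 3 /\ T0 \subset A.
Proof.
move/card_geqP => [s [us ss sub]]; exists [set x in s]; split.
  by rewrite cardsE (card_uniqP us).
by apply/subsetP => x; rewrite inE; exact: sub.
Qed.

Section Comb.
Variables (v : nat) (blocks : {set {set 'I_v}}).
Hypothesis H : is_SQS blocks.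

Definition Bx x := [set b in blocks | x \in b].
Definition Bxy x y := [set b in blocks | (x \in b) && (y \in b)].

Lemma inter2 B b : B \in blocks -> b \in blocks -> b != B -> #|b :&: B| <= 2.
Proof.
move=> BB bB nbB; rewrite leqNgt; apply/negP => /sub3 [T0 [c3 sT]].
case: H => _ /(_ T0 c3) [b0 [_ U]].
have e1 := U b (conj bB (subset_trans sT (subsetIl _ _))).
have e2 := U B (conj BB (subset_trans sT (subsetIr _ _))).
by move: nbB; rewrite -e1 -e2 eqxx.
Qed.

Lemma card3 (x y z : 'I_v) : x != y -> x != z -> y != z -> #|[set x; y; z]| = 3.
Proof.
move=> xy xz yz; rewrite -setUA cardsU1 cards2 yz !inE negb_or xy xz.
by [].
Qed.

Lemma blk_card b : b \in blocks -> #|b| = 4.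
Proof. by case: H => Hb _; exact: Hb. Qed.

Lemma pair_count x y : x != y -> 2 * #|Bxy x y| = v - 2.
Proof.
move=> xy.
pose Z := [set z | (z != x) && (z != y)].
have cZ : #|Z| = v - 2.
  have eZ : ~: [set x; y] = Z by apply/setP => z; rewrite !inE negb_or.
  have h := cardsC [set x; y]; rewrite cards2 xy eZ in h.
  have hv := card_ord v.
  simpl in h; by rewrite -[in RHS]hv -h addKn.
have := dcount (Bxy x y) Z (fun b z => z \in b).
rewrite (eq_bigr (fun=> 2)); last first.
  move=> b; rewrite inE => /andP [bB /andP [xb yb]].
  have -> : [set j in Z | j \in b] = b :\: [set x; y].
    by apply/setP => z; rewrite !inE negb_or andbC.
  rewrite cardsD (setIidPr _); last by apply/subsetP => z; rewrite !inE => /orP [] /eqP ->.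
  by rewrite blk_card // cards2 xy.
rewrite [RHS](eq_bigr (fun=> 1)); last first.
  move=> z; rewrite inE => /andP [zx zy].
  case: H => _ /(_ [set x; y; z]) [].
    by apply: card3 => //; apply/negP => /eqP e; [move: zx | move: zy]; rewrite e eqxx.
  move=> b0 [[b0B sb0] U]; apply/eqP/cards1P; exists b0; apply/setP => b.
  rewrite !inE; apply/idP/eqP.
    move=> /andP [/andP [bB /andP [xb yb]] zb]; apply/esym/U; split => //.
    by apply/subsetP => w; rewrite !inE => /orP [/orP []|] /eqP ->.
  move=> ->; rewrite b0B /=.
  have s := subsetP sb0.
  by rewrite !s // !inE eqxx ?orbT.
by rewrite !sum_nat_const cZ muln1 mulnC.
Qed.

Lemma point_count x : 3 * #|Bx x| = (v - 1) * ((v - 2) %/ 2).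
Proof.
have := dcount (Bx x) (~: [set x]) (fun b y => y \in b).
rewrite (eq_bigr (fun=> 3)); last first.
  move=> b; rewrite inE => /andP [bB xb].
  have -> : [set j in ~: [set x] | j \in b] = b :\ x.
    by apply/setP => z; rewrite !inE andbC.
  by move: (blk_card bB); rewrite (cardsD1 x) xb => -[].
rewrite [RHS](eq_bigr (fun=> (v - 2) %/ 2)); last first.
  move=> y; rewrite !inE => yx.
  have -> : [set i in Bx x | y \in i] = Bxy x y.
    by apply/setP => b; rewrite !inE andbA.
  have := pair_count (x := x) (y := y). rewrite eqtype.eq_sym yx => /(_ isT) <-.
  by rewrite mulKn.
rewrite !sum_nat_const mulnC => ->.
have h := cardsC [set x]; rewrite cards1 in h.
have hv := card_ord v.
by congr (_ * _); rewrite -[in RHS]hv -h add1n subn1.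
Qed.


Definition NT (I : finType) (T : {set I}) : {set {set I}} :=
  [set b : {set I} | b :&: T != set0].

Variables (d1 d2 : nat).
Hypothesis hd1 : forall x, #|Bx x| = d1.
Hypothesis hd2 : forall x y, x != y -> #|Bxy x y| = d2.

Lemma NT_count (B T : {set 'I_v}) : B \in blocks -> T \subset B ->
  2 * #|(blocks :\ B) :&: NT T| + #|T| * (d1 - 1) + #|T| * ((#|T| - 1) * (d2 - 1))
  = 3 * (#|T| * (d1 - 1)).
Proof.
move=> BB TB.
set S := blocks :\ B.
pose n (b : {set 'I_v}) := #|[set x in T | x \in b]|.
have nS b : b \in S -> n b <= 2.
  rewrite !inE => /andP [nbB bB].
  apply: leq_trans (inter2 BB bB nbB); apply: subset_leq_card.
  apply/subsetP => x; rewrite !inE => /andP [xT ->]; exact: (subsetP TB).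
have pos b : (b \in NT T) = (0 < n b).
  rewrite /n (_ : [set x in T | x \in b] = b :&: T) ?card_gt0 ?inE //.
  by apply/setP => x; rewrite !inE andbC.
have e1 : \sum_(b in S) n b = #|T| * (d1 - 1).
  rewrite /n dcount (eq_bigr (fun=> d1 - 1)) ?sum_nat_const // => x xT.
  have xB : x \in B by exact: (subsetP TB).
  have -> : [set i in S | x \in i] = Bx x :\ B.
    by apply/setP => b; rewrite !inE andbA.
  by rewrite -(hd1 x) [#|Bx x|](cardsD1 B) !inE BB xB add1n subn1.
have nn b : n b * n b = \sum_(x in T) \sum_(y in T) ((x \in b) && (y \in b)).
  rewrite /n card_sep big_distrl /=; apply: eq_bigr => x _.
  rewrite big_distrr /=; apply: eq_bigr => y _.
  by case: (x \in b); case: (y \in b).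
have e2 : \sum_(b in S) n b * n b = #|T| * ((d1 - 1) + (#|T| - 1) * (d2 - 1)).
  rewrite (eq_bigr _ (fun b _ => nn b)) exchange_big /=.
  rewrite (eq_bigr (fun=> (d1 - 1) + (#|T| - 1) * (d2 - 1))) ?sum_nat_const //.
  move=> x xT; rewrite exchange_big /= (bigD1 x) //=.
  have xB : x \in B by exact: (subsetP TB).
  congr (_ + _).
    rewrite -card_sep.
    have -> : [set k in S | (x \in k) && (x \in k)] = Bx x :\ B.
      by apply/setP => b; rewrite !inE andbb andbA.
    by rewrite -(hd1 x) [#|Bx x|](cardsD1 B) !inE BB xB add1n subn1.
  rewrite (eq_bigl (fun y => y \in T :\ x)); last by move=> y; rewrite !inE andbC.
  rewrite (eq_bigr (fun=> d2 - 1)) ?sum_nat_const; last first.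
    move=> y; rewrite !inE => /andP [yx yT].
    have yB : y \in B by exact: (subsetP TB).
    rewrite -card_sep.
    have -> : [set k in S | (x \in k) && (y \in k)] = Bxy x y :\ B.
      by apply/setP => b; rewrite !inE -andbA.
    have xy : x != y by apply/negP => /eqP e; move: yx; rewrite e eqxx.
    by rewrite -(hd2 xy) [#|Bxy x y|](cardsD1 B) !inE BB xB yB add1n subn1.
  by rewrite [in X in _ = X * _](cardsD1 x) xT /= add1n subSS subn0.
have pt : \sum_(b in S) (2 * (b \in NT T) + n b * n b) = \sum_(b in S) 3 * n b.
  apply: eq_bigr => b bS; rewrite pos.
  by case: (n b) (nS b bS) => [|[|[|k]]].
rewrite big_split /= -!big_distrr /= e1 e2 -card_sep in pt.
have -> : S :&: NT T = [set b in S | b \in NT T] by apply/setP => b; rewrite !inE.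
by rewrite mulnDr addnA in pt.
Qed.

End Comb.

Local Open Scope ring_scope.

Lemma expandL (I : finType) (R : comNzRingType) (f g : I -> R) (S : {set I}) :
  \prod_(i in S) (f i + g i) =
  \sum_(A in powerset S) (\prod_(i in A) f i) * \prod_(i in S :\: A) g i.
Proof.
move: {2}#|S| (erefl #|S|) => n; elim: n S => [|n IH] S cS.
  move/eqP: cS; rewrite cards_eq0 => /eqP ->.
  by rewrite powerset0 big_set1 !big_set0 setD0 big_set0 mulr1.
have /card_gt0P [a aS] : (0 < #|S|)%N by rewrite cS.
have cS' : #|S :\ a| = n by move: cS; rewrite (cardsD1 a) aS => -[].
rewrite (big_setD1 a aS) /= IH.
rewrite [RHS](bigID (fun A : {set I} => a \in A)) /= mulrDl !big_distrr /=.
congr (_ + _); last first.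
  apply: eq_big => A.
    by rewrite powersetE subsetD1 powersetE.
  rewrite powersetE subsetD1 => /andP [AS aA].
  have aSA : a \in S :\: A by rewrite inE aS aA.
  rewrite (big_setD1 a aSA) /= mulrCA; congr (_ * (_ * _)).
  by apply: eq_bigl => i; rewrite !inE; case: (i == a); rewrite ?andbF.
rewrite [RHS](reindex_onto (fun A => a |: A) (fun A => A :\ a)) /=; last first.
  by move=> A /andP [_ aA]; rewrite setD1K.
apply: eq_big => A.
  rewrite !powersetE setU11 andbT subsetD1 subUset sub1set aS /=.
  case AS: (A \subset S) => //=.
  apply/idP/eqP.
    move=> aA; apply/setP => i; rewrite !inE.
    by case: eqP => [->|]; [rewrite (negbTE aA)|].
  by move=> <-; rewrite !inE eqxx.
rewrite powersetE subsetD1 => /andP [AS aA].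
rewrite big_setU1 //= mulrA; congr (_ * _).
by apply: eq_bigl => i; rewrite !inE; case: (i == a); rewrite ?andbF.
by [].

Qed.

Lemma prod_ind (I : finType) (R : comNzRingType) (X : {set I}) (P : pred I) :
  \prod_(i in X) (P i)%:R = ([forall i in X, P i])%:R :> R.
Proof.
case: (boolP [forall i in X, P i]) => H.
  by rewrite big1 // => i iX; rewrite (forall_inP H).
by move/forall_inPn: H => [i iX nP]; rewrite (bigD1 i) //= (negbTE nP) /= mul0r.
Qed.

Lemma weight (I : finType) (R : comNzRingType) (S N : {set I}) (p : R) :
  \sum_(A in powerset S) p ^+ #|A| * (1 - p) ^+ (#|S| - #|A|)%N * (A :&: N == set0)%:R
  = (1 - p) ^+ #|S :&: N|.
Proof.
have := expandL (fun i => p * (i \notin N)%:R) (fun=> 1 - p) S.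
rewrite (big_setID N) /=.
rewrite [X in X * _ = _](eq_bigr (fun=> 1 - p)); last first.
  by move=> i; rewrite inE => /andP [_ ->]; rewrite /= mulr0 add0r.
rewrite [X in _ * X = _]big1; last first.
  by move=> i; rewrite inE => /andP [-> _]; rewrite /= mulr1 addrC subrK.
rewrite mulr1 prodr_const => ->.
apply: eq_bigr => A; rewrite powersetE => AS.
rewrite big_split /= prodr_const prod_ind prodr_const cardsD (setIidPr AS).
rewrite [RHS]mulrAC.
have -> : [forall i in A, i \notin N] = (A :&: N == set0); last by [].
apply/idP/idP.
  move/forall_inP=> H; rewrite setI_eq0 disjoints_subset; apply/subsetP => x xA.
  by rewrite inE; exact: H.
by rewrite setI_eq0 disjoints_subset => /subsetP H; apply/forall_inP => x xA; move: (H x xA); rewrite inE.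
Qed.


Lemma ind_exp (I : finType) (R : comNzRingType) (A : {set {set I}}) (B : {set I}) :
  (B \subset cover A)%:R =
  \sum_(T in powerset B) (-1) ^+ #|T| * (A :&: NT T == set0)%:R :> R.
Proof.
have := expandL (fun x => - (x \notin cover A)%:R) (fun=> 1 : R) B.
rewrite (eq_bigr (fun x => (x \in cover A)%:R)); last first.
  by move=> x _; case: (x \in cover A); rewrite /= ?oppr0 ?add0r ?addNr.
rewrite prod_ind.
have -> : [forall x in B, x \in cover A] = (B \subset cover A).
  by apply/forall_inP/subsetP.
move=> ->; apply: eq_bigr => T _.
rewrite [X in _ * X]big1_eq mulr1 prodrN prod_ind.
have -> : [forall i in T, i \notin cover A] = (A :&: NT T == set0); last by [].
apply/idP/idP.
  move/forall_inP=> H; apply/eqP/setP => b; rewrite !inE; apply/negbTE; apply/andP => -[bA].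
  case/set0Pn => x; rewrite inE => /andP [xb xT].
  move/negP: (H x xT); apply; apply/bigcupP; exists b => //.
move/eqP=> H; apply/forall_inP => x xT; apply/bigcupP => -[b bA xb].
have : b \in A :&: NT T.
  by rewrite !inE bA; apply/set0Pn; exists x; rewrite inE xb xT.
by rewrite H inE.
Qed.

Lemma repair (v : nat) (blocks : {set {set 'I_v}}) (B : {set 'I_v}) A :
  A \in powerset (blocks :\ B) ->
  [exists P in powerset A, is_repair_set blocks B P] = (B \subset cover A).
Proof.
move=> AS; apply/exists_inP/idP.
  case=> P; rewrite powersetE => PA /andP [_ Bc]; apply: subset_trans Bc _.
  apply/subsetP => x /bigcupP [b bP xb]; apply/bigcupP; exists b => //.
  exact: (subsetP PA).
move=> Bc; exists A; first by rewrite powersetE.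
by rewrite /is_repair_set -powersetE AS Bc.
Qed.

Lemma rel_expand (R : comNzRingType) (v : nat) (blocks : {set {set 'I_v}})
  (B : {set 'I_v}) (p : R) :
  reliability blocks B p =
  \sum_(T in powerset B) (-1) ^+ #|T| * (1 - p) ^+ #|(blocks :\ B) :&: NT T|.
Proof.
rewrite /reliability.
under eq_bigr => A AS do rewrite (repair AS) (ind_exp R) big_distrr.
rewrite exchange_big /=; apply: eq_bigr => T _.
rewrite -weight big_distrr /=; apply: eq_bigr => A _.
by rewrite mulrCA mulrA.
Qed.

Lemma group_size (I : finType) (R : comNzRingType) (B : {set I}) (F : nat -> R) :
  \sum_(T in powerset B) F #|T| = \sum_(k < #|B|.+1) 'C(#|B|, k)%:R * F k.
Proof.
rewrite (partition_big (fun T : {set I} => inord #|T| : 'I_#|B|.+1) predT) //=.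
apply: eq_bigr => k _.
have le T : T \in powerset B -> (#|T| < #|B|.+1)%N.
  by rewrite powersetE ltnS => /subset_leq_card.
rewrite (eq_bigr (fun=> F k)); last first.
  by move=> T /andP [TB /eqP <-]; rewrite inordK ?le.
rewrite (eq_bigl (fun T => T \in [set T : {set I} | (T \subset B) && (#|T| == k)])).
  by rewrite sumr_const cards_draws mulr_natl.
move=> T; rewrite !inE -powersetE.
case TB: (T \in powerset B) => //=.
apply/eqP/eqP => e.
  by rewrite -e inordK ?le.
by apply: val_inj; rewrite /= inordK ?le.
Qed.

Theorem mainTheorem9 (R : realFieldType) (v : nat)
  (blocks : {set {set 'I_v}}) (B : {set 'I_v}) (p : R) :
  is_SQS blocks -> B \in blocks -> 0 <= p -> p <= 1 ->
  let q := 1 - p in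
  reliability blocks B p =
    1 - 4 * q ^+ ((r1 v).-1)
      + 6 * q ^+ (2 * r1 v - r2 v - 1)%N
      - 4 * q ^+ (3 * r1 v - 3 * r2 v)%N
      + q ^+ (4 * r1 v + 2 - 6 * r2 v)%N.
Proof.
move=> HS BB _ _ q.
have cB : #|B| = 4 by case: HS => Hb _; exact: Hb.
have [x xB] : exists x, x \in B by apply/card_gt0P; rewrite cB.
have [y yB] : exists y, y \in B :\ x by apply/card_gt0P; move: cB; rewrite (cardsD1 x) xB /=; lia.
have xy : x != y by move: yB; rewrite !inE eqtype.eq_sym => /andP [].
have hd2 : forall a b : 'I_v, a != b -> #|Bxy blocks a b| = r2 v.
  move=> a b ab; rewrite /r2 bin1 -subn2 -(pair_count HS ab) mulKn //.
have c2 := pair_count HS xy.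
have hd1 : forall a : 'I_v, #|Bx blocks a| = r1 v.
  move=> a; have e := point_count HS a.
  rewrite -c2 mulKn // in e.
  rewrite /r1 bin2 -subn2 -subn1 -c2 mulnCA mul2n doubleK -e mulKn //.
have d1p : (1 <= r1 v)%N.
  by rewrite -(hd1 x) card_gt0; apply/set0Pn; exists B; rewrite inE BB xB.
have d2p : (1 <= r2 v)%N.
  rewrite -(hd2 x y xy) card_gt0; apply/set0Pn; exists B.
  by rewrite !inE BB xB; move: yB; rewrite inE => /andP [_ ->].
pose h k := ((3 * (k * (r1 v - 1)) - k * (r1 v - 1) - k * ((k - 1) * (r2 v - 1))) %/ 2)%N.
have hN : forall T, T \in powerset B -> #|(blocks :\ B) :&: NT T| = h #|T|.
  move=> T; rewrite powersetE => TB.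
  have := NT_count HS hd1 hd2 BB TB.
  rewrite /h; move: (#|_ :&: NT T|) (#|T| * (r1 v - 1))%N (#|T| * ((#|T| - 1) * (r2 v - 1)))%N.
  move=> N a b' e; lia.
rewrite rel_expand.
rewrite (eq_bigr (fun T : {set 'I_v} => (-1) ^+ #|T| * q ^+ h #|T|)); last by move=> T /hN ->.
rewrite (group_size B (fun k => (-1) ^+ k * q ^+ h k)) cB.
rewrite !big_ord_recr big_ord0 /=.
have h0 : h 0%N = 0%N by rewrite /h; lia.
have h1 : h 1%N = (r1 v).-1 by rewrite /h; lia.
have h2 : h 2%N = (2 * r1 v - r2 v - 1)%N by rewrite /h; lia.
have h3 : h 3%N = (3 * r1 v - 3 * r2 v)%N by rewrite /h; lia.
have h4 : h 4%N = (4 * r1 v + 2 - 6 * r2 v)%N by rewrite /h; lia.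
rewrite h0 h1 h2 h3 h4.
have -> : 'C(4, 0) = 1%N by [].
have -> : 'C(4, 1) = 4%N by [].
have -> : 'C(4, 2) = 6%N by [].
have -> : 'C(4, 3) = 4%N by [].
have -> : 'C(4, 4) = 1%N by [].
rewrite /=. ring.
Qed.
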